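(* If $\alpha,\beta\in\Omega$ are the critical itineraries of an overlapping function, i.e. there exist $a\in(1,2]$ and $p\in[1-1/a,1/a]$ with $\alpha=\tau_{(a,p,-)}(p)$ and $\beta=\tau_{(a,p,+)}(p)$, then $(\alpha,\beta)$ is an admissible, non-null pair.
   Context: For $1<a\le 2$ and $1-\frac1a\le p\le\frac1a$: $f_{(a,p,-)}(x)=ax$ if $x\le p$, $ax+(1-a)$ if $x>p$; $f_{(a,p,+)}(x)=ax$ if $x<p$, $ax+(1-a)$ if $x\ge p$, on $[0,1]$. $\Omega=\{0,1\}^{\infty}$ is the set of infinite binary strings $\omega_0\omega_1\cdots$. For $f_{(a,p,-)}$ let $I_0=[0,p]$, $I_1=(p,1]$; for $f_{(a,p,+)}$ let $I_0=[0,p)$, $I_1=[p,1]$. The itinerary $\tau_{(a,p,\pm)}(x)=\omega$ has $\omega_n=0$ if $f_{(a,p,\pm)}^n(x)\in I_0$ and $\omega_n=1$ if it lies in $I_1$. $S$ is the left shift on $\Omega$, $\preceq$ the lexicographic order, with intervals $[\alpha,\beta]=\{\omega:\alpha\preceq\omega\preceq\beta\}$ etc. A pair $(\alpha,\beta)$ is admissible if $\alpha_0=0,\alpha_1=1,\beta_0=1,\beta_1=0$, and $S^n\alpha\notin(\alpha,\beta]$, $S^n\beta\notin[\alpha,\beta)$ for all $n\ge0$. Then $\Omega_{(\alpha,\beta,-)}=\{\omega:S^n\omega\notin(\alpha,\beta]\ \forall n\ge 0\}$, $\Omega_{(\alpha,\beta,+)}=\{\omega:S^n\omega\notin[\alpha,\beta)\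 \forall n\ge 0\}$, $\Omega_{(\alpha,\beta)}$ their union. For $\Gamma\subseteq\Omega$, $\Gamma_n=\{\omega_0\cdots\omega_n:\omega\in\Gamma\}$ and $h(\Gamma)=\limsup_n\frac1n\ln|\Gamma_n|$. The admissible pair is null if $h(\Omega_{(\alpha,\beta)})=0$, non-null otherwise. *)

(* Defs.v *)
From HB Require Import structures.
From mathcomp Require Import all_boot all_order all_algebra.
From mathcomp Require Import all_classical all_reals.
From mathcomp Require Import ereal sequences exp.
Set Implicit Arguments. Unset Strict Implicit. Unset Printing Implicit Defensive.
Import Order.TTheory GRing.Theory Num.Theory.
Local Open Scope ring_scope.

(* Omega: infinite binary strings; false = 0, true = 1. *)
Definition Omega := nat -> bool.

Definition f_minus {R : realType} (a p : R) (x : R) : R :=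
  if x <= p then a * x else a * x + (1 - a).
Definition f_plus {R : realType} (a p : R) (x : R) : R :=
  if x < p then a * x else a * x + (1 - a).

(* Itineraries: omega_n = 1 iff f^n(x) lies in I_1. *)
Definition itin_minus {R : realType} (a p x : R) : Omega :=
  fun n => p < iter n (f_minus a p) x.          (* I_1 = (p,1] *)
Definition itin_plus {R : realType} (a p x : R) : Omega :=
  fun n => p <= iter n (f_plus a p) x.          (* I_1 = [p,1] *)

Definition shiftn (n : nat) (w : Omega) : Omega := fun i => w (n + i)%N.

Definition lex_lt (w v : Omega) : Prop :=
  exists k, (forall i, (i < k)%N -> w i = v i) /\ w k = false /\ v k = true.
Definition lex_le (w v : Omega) : Prop := w = v \/ lex_lt w v.

Definition in_oc (a b w : Omega) : Prop := lex_lt a w /\ lex_le w b.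
Definition in_co (a b w : Omega) : Prop := lex_le a w /\ lex_lt w b.

Definition admissible (a b : Omega) : Prop :=
  a 0%N = false /\ a 1%N = true /\ b 0%N = true /\ b 1%N = false /\
  (forall n, ~ in_oc a b (shiftn n a)) /\
  (forall n, ~ in_co a b (shiftn n b)).

Definition Omega_minus (a b : Omega) : set Omega :=
  fun w => forall n, ~ in_oc a b (shiftn n w).
Definition Omega_plus (a b : Omega) : set Omega :=
  fun w => forall n, ~ in_co a b (shiftn n w).
Definition Omega_ab (a b : Omega) : set Omega :=
  fun w => Omega_minus a b w \/ Omega_plus a b w.

Definition prefixes (G : set Omega) (n : nat) : {set (n.+1).-tuple bool} :=
  [set t : (n.+1).-tuple bool |
     `[< exists w, G w /\ forall i : 'I_n.+1, tnth t i = w i >]].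

Definition entropy {R : realType} (G : set Omega) : \bar R :=
  limn_esup (fun n => ((ln (#|prefixes G n|%:R : R)) / n%:R)%:E).

Definition nonnull {R : realType} (a b : Omega) : Prop :=
  entropy (R := R) (Omega_ab a b) != 0%E.

(* Main.v *)
Require Import Defs.
From HB Require Import structures.
From mathcomp Require Import all_boot all_order all_algebra.
From mathcomp Require Import all_classical all_reals.
From mathcomp Require Import ereal sequences exp.
From mathcomp Require Import topology normedtype.
From mathcomp Require Import ring lra.
Import Order.TTheory GRing.Theory Num.Theory.
Local Open Scope ring_scope.

Definition Fm {R : realType} (b : bool) (a p : R) : R -> R :=
  if b then f_plus a p else f_minus a p.
Definition sym {R : realType} (b : bool) (p z : R) : bool :=
  if b then p <= z else p < z.
Definition itn {R : realType} (b : bool) (a p x : R) : Omega :=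
  fun n => sym b p (iter n (Fm b a p) x).

Lemma F_sym {R : realType} b (a p z : R) :
  Fm b a p z = if sym b p z then a * z + (1 - a) else a * z.
Proof.
case: b; rewrite /Fm /sym /f_plus /f_minus.
  by rewrite leNgt; case: (z < p).
by rewrite ltNge; case: (z <= p).
Qed.

Lemma diff_iter {R : realType} b c (a p x y : R) m :
  (forall i, (i < m)%N -> itn b a p x i = itn c a p y i) ->
  iter m (Fm c a p) y - iter m (Fm b a p) x = a ^+ m * (y - x).
Proof.
elim: m => [|m IH] H; first by rewrite /= expr0 mul1r.
rewrite !iterS !F_sym.
have -> : sym b p (iter m (Fm b a p) x) = sym c p (iter m (Fm c a p) y).
  exact: (H m (ltnSn m)).
have IH' := IH (fun i Hi => H i (ltnW Hi)).
rewrite exprS -mulrA -IH'.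
by case: sym; ring.
Qed.

Lemma F_inv {R : realType} b (a p z : R) :
  1 < a -> 1 - a^-1 <= p -> p <= a^-1 -> 0 <= z <= 1 ->
  0 <= Fm b a p z <= 1.
Proof.
move=> a1 hp1 hp2 /andP[z0 z1].
have a0 : 0 < a by apply: lt_trans a1.
have e : a * a^-1 = 1 by rewrite mulfV ?gt_eqF.
have h1 : a - 1 <= a * p by nra.
have h2 : a * p <= 1 by nra.
rewrite F_sym; case: b; rewrite /sym.
- case: ifP => hz.
  + apply/andP; split; nra.
  + move: hz => /negbT; rewrite -ltNge => hz; apply/andP; split; nra.
- case: ifP => hz.
  + apply/andP; split; nra.
  + move: hz => /negbT; rewrite -leNgt => hz; apply/andP; split; nra.
Qed.

Lemma iter_inv {R : realType} b (a p z : R) n :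
  1 < a -> 1 - a^-1 <= p -> p <= a^-1 -> 0 <= z <= 1 ->
  0 <= iter n (Fm b a p) z <= 1.
Proof.
move=> a1 hp1 hp2 hz; elim: n => [//|n IH].
by rewrite iterS; apply: F_inv.
Qed.

Lemma bernoulli_le {R : realType} (a : R) n : 1 <= a -> 1 + n%:R * (a - 1) <= a ^+ n.
Proof.
move=> a1; elim: n => [|n IH]; first by rewrite mul0r addr0 expr0.
rewrite exprS -natr1.
have h : 1 <= a ^+ n by apply: exprn_ege1.
nra.
Qed.

Lemma unbounded {R : realType} (a M : R) : 1 < a -> exists k, M < a ^+ k.
Proof.
move=> a1.
have a0 : 0 < a - 1 by rewrite subr_gt0.
have hM : 0 <= `|M| / (a - 1) by rewrite divr_ge0 // ltW.
have := archi_boundP hM; set k := Num.Def.archi_bound _ => hk.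
exists k.
have := bernoulli_le a k (ltW a1).
have : `|M| < k%:R * (a - 1) by rewrite -ltr_pdivrMr.
have := ler_norm M.
lra.
Qed.

Lemma lex_irr (w : Omega) : ~ lex_lt w w.
Proof. by case=> k [_ [-> ]]. Qed.

Lemma lex_asym (w v : Omega) : lex_lt w v -> lex_lt v w -> False.
Proof.
case=> k1 [e1 [w1 v1]] [k2 [e2 [v2 w2]]].
case: (ltngtP k1 k2) => h.
- by move: (e2 _ h); rewrite w1 v1.
- by move: (e1 _ h); rewrite w2 v2.
- by subst; rewrite w1 in w2.
Qed.

Lemma sym_le {R : realType} b (p z : R) : sym b p z -> p <= z.
Proof. by case: b => //= /ltW. Qed.

Lemma nsym_le {R : realType} b (p z : R) : ~~ sym b p z -> z <= p.
Proof. by case: b; rewrite /sym /= -?ltNge -?leNgt // => /ltW. Qed.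

Arguments lex_asym {w v}.
Arguments lex_irr {w}.

Lemma mono {R : realType} b c (a p x y : R) :
  1 < a -> 1 - a^-1 <= p -> p <= a^-1 -> 0 <= x <= 1 -> 0 <= y <= 1 -> x < y ->
  lex_lt (itn b a p x) (itn c a p y).
Proof.
move=> a1 hp1 hp2 hx hy xy.
pose P := [pred k | itn b a p x k != itn c a p y k].
case: (pselect (exists k, P k)) => [exP|nex].
  case: (ex_minnP exP) => k Pk mink.
  exists k; split.
    move=> i ik; apply/eqP; apply: contraTT ik => Pi.
    by rewrite -leqNgt; apply: mink.
  have eqi : forall i, (i < k)%N -> itn b a p x i = itn c a p y i.
    move=> i ik; apply/eqP; apply: contraTT ik => Pi.
    by rewrite -leqNgt; apply: mink.
  have := @diff_iter R b c a p x y k eqi.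
  have apos : 0 < a ^+ k * (y - x).
    by rewrite mulr_gt0 ?exprn_gt0 ?subr_gt0 // (lt_trans _ a1).
  move: Pk; rewrite /P /= /itn.
  set X := iter k (Fm b a p) x; set Y := iter k (Fm c a p) y.
  move=> Pk hdiff.
  have XY : X < Y by rewrite -subr_gt0 hdiff.
  have hb : sym b p X = false.
    apply/negP => sb; move: Pk; rewrite sb; case sc: (sym c p Y) => // _.
    have := @sym_le R b p X sb; have := @nsym_le R c p Y (negbT sc); lra.
  rewrite hb; move: Pk; rewrite hb /=; case: (sym c p Y) => //.
exfalso.
have hall : forall m, iter m (Fm c a p) y - iter m (Fm b a p) x = a ^+ m * (y - x).
  move=> m; apply: (@diff_iter R b c a p x y m) => i _.
  by apply/eqP; apply/negPn/negP => Pi; apply: nex; exists i.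
have yx : 0 < y - x by rewrite subr_gt0.
have [k hk] := unbounded a (1 / (y - x)) a1.
have := hall k.
have /andP[X0 X1] := @iter_inv R b a p x k a1 hp1 hp2 hx.
have /andP[Y0 Y1] := @iter_inv R c a p y k a1 hp1 hp2 hy.
have : 1 < a ^+ k * (y - x) by rewrite -ltr_pdivrMr.
lra.
Qed.

Lemma shift_itn {R : realType} b (a p x : R) n :
  shiftn n (itn b a p x) = itn b a p (iter n (Fm b a p) x).
Proof. by apply/funext => i; rewrite /shiftn /itn addnC iterD. Qed.

Lemma notin_minus {R : realType} (a p z : R) :
  1 < a -> 1 - a^-1 <= p -> p <= a^-1 -> 0 <= z <= 1 ->
  ~ in_oc (itn false a p p) (itn true a p p) (itn false a p z).
Proof.
move=> a1 hp1 hp2 hz.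
have hp : 0 <= p <= 1.
  have a0 : 0 < a by apply: lt_trans a1.
  have e : a * a^-1 = 1 by rewrite mulfV ?gt_eqF.
  have ai : 0 < a^-1 by rewrite invr_gt0.
  apply/andP; split; nra.
case=> h1 h2.
case: (ltrgtP z p) => hzp.
- have h3 := mono false false _ _ _ _ a1 hp1 hp2 hz hp hzp. exact: (lex_asym h1 h3).
- have h3 := mono true false _ _ _ _ a1 hp1 hp2 hp hz hzp.
  case: h2 => [e|h2]; first by rewrite e in h3; exact: lex_irr h3.
  exact: lex_asym h2 h3.
- by subst; exact: lex_irr h1.
Qed.

Lemma notin_plus {R : realType} (a p z : R) :
  1 < a -> 1 - a^-1 <= p -> p <= a^-1 -> 0 <= z <= 1 ->
  ~ in_co (itn false a p p) (itn true a p p) (itn true a p z).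
Proof.
move=> a1 hp1 hp2 hz.
have hp : 0 <= p <= 1.
  have a0 : 0 < a by apply: lt_trans a1.
  have e : a * a^-1 = 1 by rewrite mulfV ?gt_eqF.
  have ai : 0 < a^-1 by rewrite invr_gt0.
  apply/andP; split; nra.
case=> h1 h2.
case: (ltrgtP z p) => hzp.
- have h3 := mono true false _ _ _ _ a1 hp1 hp2 hz hp hzp.
  case: h1 => [e|h1]; first by rewrite -e in h3; exact: lex_irr h3.
  exact: lex_asym h1 h3.
- exact: (lex_asym h2 (mono true true _ _ _ _ a1 hp1 hp2 hp hz hzp)).
- by subst; exact: lex_irr h2.
Qed.

Lemma itn_minus_in {R : realType} (a p x : R) :
  1 < a -> 1 - a^-1 <= p -> p <= a^-1 -> 0 <= x <= 1 ->
  Omega_minus (itn false a p p) (itn true a p p) (itn false a p x).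
Proof.
move=> a1 hp1 hp2 hx n; rewrite shift_itn; apply: notin_minus => //.
exact: iter_inv.
Qed.

Lemma itn_plus_in {R : realType} (a p x : R) :
  1 < a -> 1 - a^-1 <= p -> p <= a^-1 -> 0 <= x <= 1 ->
  Omega_plus (itn false a p p) (itn true a p p) (itn true a p x).
Proof.
move=> a1 hp1 hp2 hx n; rewrite shift_itn; apply: notin_plus => //.
exact: iter_inv.
Qed.

Lemma sep_lemma {R : realType} (a p x y : R) m :
  1 < a -> 1 - a^-1 <= p -> p <= a^-1 -> 0 <= x <= 1 -> 0 <= y <= 1 ->
  1 < a ^+ m * (y - x) ->
  exists j, (j < m)%N /\ itn false a p x j != itn false a p y j.
Proof.
move=> a1 hp1 hp2 hx hy h.
apply: contrapT => nex.
have := @diff_iter R false false a p x y m.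
have /andP[X0 X1] := @iter_inv R false a p x m a1 hp1 hp2 hx.
have /andP[Y0 Y1] := @iter_inv R false a p y m a1 hp1 hp2 hy.
suff H : forall i, (i < m)%N -> itn false a p x i = itn false a p y i.
  move=> /(_ H); lra.
move=> i im; apply/eqP; apply/negPn/negP => Pi; apply: nex; exists i; split => //.
Qed.

Lemma card_pref {R : realType} (a p : R) k t m :
  1 < a -> 1 - a^-1 <= p -> p <= a^-1 ->
  (m.+1 = k * t)%N -> 4 <= a ^+ k -> (0 < t)%N ->
  ((2 ^ t).+1 <= #|prefixes (Omega_ab (itn false a p p) (itn true a p p)) m|)%N.
Proof.
move=> a1 hp1 hp2 emk a4 t0.
set N := (2 ^ t)%N.
have Q2 : 2 <= (N%:R : R).
  rewrite /N natrX; case: t t0 {emk N} => // t _.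
  rewrite exprS; have : 1 <= (2:R) ^+ t by apply: exprn_ege1; lra.
  lra.
have Qpos : 0 < (N%:R : R) by lra.
have A4 : N%:R * N%:R <= a ^+ m.+1.
  rewrite emk exprM /N natrX -exprMn.
  apply: lerXn2r; rewrite ?nnegrE; lra.
pose xi (i : 'I_N.+1) : R := i%:R / N%:R.
have xin (i : 'I_N.+1) : 0 <= xi i <= 1.
  apply/andP; split; first by rewrite /xi divr_ge0.
  rewrite /xi ler_pdivrMr // mul1r ler_nat; exact: (ltn_ord i).
pose g (i : 'I_N.+1) : (m.+1).-tuple bool := [tuple itn false a p (xi i) j | j < m.+1].
have key (i j : 'I_N.+1) : (i < j)%N -> g i != g j.
  move=> ij; apply/eqP => e.
  have h : 1 < a ^+ m.+1 * (xi j - xi i).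
    have D1 : 1 <= (xi j - xi i) * N%:R.
      rewrite /xi -mulrBl mulfVK ?gt_eqF //.
      have : (i.+1%:R : R) <= j%:R by rewrite ler_nat.
      rewrite -natr1; lra.
    have Dp : 0 < xi j - xi i by nra.
    nra.
  have [j0 [j0m ne]] := @sep_lemma R a p (xi i) (xi j) m.+1 a1 hp1 hp2 (xin i) (xin j) h.
  have := congr1 (fun u => tnth u (Ordinal j0m)) e.
  by rewrite !tnth_mktuple => E; move/eqP: ne; apply; exact: E.
have ginj : injective g.
  move=> i j e; apply: val_inj => /=.
  case: (ltngtP i j) => // h; [have := key _ _ h | have := key _ _ h];
    by rewrite e eqxx.
have sub : [set g i | i in [set: 'I_N.+1]] \subset
    prefixes (Omega_ab (itn false a p p) (itn true a p p)) m.
  apply/fintype.subsetP => _ /imsetP [i _ ->].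
  rewrite inE; apply/asboolP; exists (itn false a p (xi i)); split.
    by left; apply: itn_minus_in.
  by move=> j; rewrite tnth_mktuple.
have := subset_leq_card sub.
by rewrite card_imset // cardsT card_ord.
Qed.

Lemma entropy_ge {R : realType} (a p : R) :
  1 < a -> 1 - a^-1 <= p -> p <= a^-1 ->
  exists c : R, 0 < c /\
    (c%:E <= entropy (R := R) (Omega_ab (itn false a p p) (itn true a p p)))%E.
Proof.
move=> a1 hp1 hp2.
have [k hk] := unbounded a 4 a1.
have k0 : (0 < k)%N by case: k hk => //; rewrite expr0; lra.
have L0 : 0 < ln (2 : R) by apply: ln_gt0; lra.
have K0 : 0 < (k%:R : R) by rewrite ltr0n.
exists (ln 2 / k%:R); split; first by rewrite divr_gt0.
rewrite /entropy limn_esup_lim; apply: lime_ge; first exact: is_cvg_esups.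
apply: nearW => n /=.
set u := (fun n0 => _).
pose t := n.+2.
pose m := (k * t).-1.
have emk : m.+1 = (k * t)%N by rewrite /m prednK // muln_gt0 k0.
have nm : (n <= m)%N.
  rewrite -ltnS emk /t; apply: leq_trans (leq_pmull _ k0); exact: ltnW.
apply: (le_trans _ (ereal_sup_ubound (x := u m) _)); last by exists m.
rewrite /u lee_fin.
have hc := @card_pref R a p k t m a1 hp1 hp2 emk (ltW hk) (isT : (0 < t)%N).
set C := #|_| in hc *.
have m0 : 0 < (m%:R : R) by rewrite ltr0n -ltnS emk; apply: leq_trans (leq_pmull t k0).
have lnC : (t%:R * ln 2 : R) <= ln (C%:R).
  rewrite mulr_natl -lnXn; last lra.
  rewrite -natrX ler_ln ?posrE ?ltr0n ?expn_gt0 //; last exact: leq_trans hc.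
  rewrite ler_nat; exact: ltnW.
rewrite ler_pdivlMr //.
have eK : (m%:R + 1 : R) = k%:R * t%:R by rewrite -natrM -emk natr1.
set v := ln 2 / k%:R.
have ev : v * k%:R = ln 2 by rewrite /v mulfVK ?gt_eqF.
have v0 : 0 < v by rewrite divr_gt0.
nra.
Qed.

Theorem theorem2 (R : realType) (a p : R) (alpha beta : Omega) :
  1 < a -> a <= 2 -> 1 - a^-1 <= p -> p <= a^-1 ->
  alpha = itin_minus a p p -> beta = itin_plus a p p ->
  admissible alpha beta /\ nonnull (R := R) alpha beta.
Proof.
move=> a1 a2 hp1 hp2 -> ->.
change (itin_minus a p p) with (itn false a p p).
change (itin_plus a p p) with (itn true a p p).
have a0 : 0 < a by apply: lt_trans a1.
have e : a * a^-1 = 1 by rewrite mulfV ?gt_eqF.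
have ai : 0 < a^-1 by rewrite invr_gt0.
have hp : 0 < p < 1 by apply/andP; split; nra.
have hp' : 0 <= p <= 1 by case/andP: hp => h1 h2; rewrite !ltW.
case/andP: hp => hp0 hp1'.
split.
  split; first by rewrite /itn /sym /= ltxx.
  split; first by rewrite /itn /sym /= /Fm /f_minus lexx; nra.
  split; first by rewrite /itn /sym /= lexx.
  split; first by rewrite /itn /sym /= /Fm /f_plus ltxx; apply/negbTE; rewrite -ltNge; nra.
  split.
    exact: itn_minus_in.
  exact: itn_plus_in.
have [c [c0 hc]] := @entropy_ge R a p a1 hp1 hp2.
rewrite /nonnull; apply/negP => /eqP ez; rewrite ez lee_fin in hc; lra.
Qed.
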